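(* Let $\mathfrak d$ be a delta operator with basic sequence $(p_n(x))_{n\ge0}$, let $a,b\in\mathbb K$, and let $\mathcal Z$ be the arithmetic grid $(a+bi)_{i\ge0}$. Then for every $n\ge1$, $$t_n(x;\mathfrak d,\mathcal Z)=\frac{(x-a)\,p_n(x-a-nb)}{x-a-nb},$$ where the right side is a polynomial since $p_n(y)$ is divisible by $y$.
   Context: $\mathbb K$ is a field of characteristic zero; a delta operator is a linear operator $\mathfrak d$ on $\mathbb K[x]$ commuting with all shifts $E_a:f(x)\mapsto f(x+a)$ and with $\mathfrak d(x)$ a nonzero constant; its basic sequence is the unique $(p_n)$ with $\deg p_n=n$, $p_0=1$, $p_n(0)=0$ ($n\ge1$), $\mathfrak dp_n=np_{n-1}$. $\varepsilon_z$ is evaluation at $z$. $t_n(x;\mathfrak d,\mathcal Z)$ is the $n$-th term of the generalized Gončarov basis associated with $(\mathfrak d,\mathcal Z)$, i.e. the unique sequence $(t_n)_{n\ge0}$ with $\deg t_n=n$ and $\varepsilon_{z_i}(\mathfrak d^{\,i}(t_n))=n!\,\delta_{i,n}$ for all $i,n$. *)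

(* Defs.v *)
From HB Require Import structures.
From mathcomp Require Import all_boot all_order all_algebra.
Set Implicit Arguments. Unset Strict Implicit. Unset Printing Implicit Defensive.
Import Order.TTheory GRing.Theory Num.Theory.
Local Open Scope ring_scope.

Definition shiftp (K : fieldType) (a : K) (f : {poly K}) : {poly K} :=
  f \Po ('X + a%:P).

Definition is_delta_operator (K : fieldType) (d : {poly K} -> {poly K}) : Prop :=
  [/\ (forall (c : K) (f g : {poly K}), d (c *: f + g) = c *: d f + d g),
      (forall (a : K) (f : {poly K}), d (shiftp a f) = shiftp a (d f)) &
      (exists2 c : K, c != 0 & d 'X = c%:P)].

Definition is_basic_sequence (K : fieldType) (d : {poly K} -> {poly K})
  (p : nat -> {poly K}) : Prop :=
  [/\ p 0%N = 1,
      (forall n, size (p n) = n.+1),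
      (forall n, (0 < n)%N -> (p n).[0] = 0) &
      (forall n, (0 < n)%N -> d (p n) = n%:R *: p n.-1)].

Definition is_goncarov_basis (K : fieldType) (d : {poly K} -> {poly K})
  (z : nat -> K) (t : nat -> {poly K}) : Prop :=
  (forall n, size (t n) = n.+1) /\
  (forall i n, (iter i d (t n)).[z i] = (n`!)%:R * (i == n)%:R).

(* Main.v *)
Require Import Defs.
From HB Require Import structures.
From mathcomp Require Import all_boot all_order all_algebra.
From mathcomp Require Import ring.
Set Implicit Arguments. Unset Strict Implicit. Unset Printing Implicit Defensive.
Import GRing.Theory.
Local Open Scope ring_scope.

Section Delta.
Variables (K : fieldType) (charK0 : [pchar K] =i pred0).
Variable d : {poly K} -> {poly K}.
Hypothesis dlin : forall (c : K) (f g : {poly K}), d (c *: f + g) = c *: d f + d g.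
Hypothesis dshift : forall (a : K) (f : {poly K}), d (shiftp a f) = shiftp a (d f).
Variable c : K.
Hypothesis c0 : c != 0.
Hypothesis dX : d 'X = c%:P.

Lemma natf_neq0 n : (n.+1%:R : K) != 0.
Proof. by move/pcharf0P: charK0 => ->. Qed.

Lemma natf_inj : injective (fun n : nat => (n%:R : K)).
Proof.
move=> m n /= e; apply/eqP; rewrite eqn_leq; apply/andP; split; apply/negP=> /negP.
  rewrite -ltnNge => lt; move: e; rewrite -(subnK (ltnW lt)) natrD.
  move/eqP; rewrite -subr_eq0 addrK; move/pcharf0P: charK0 => ->.
  by rewrite subn_eq0 leqNgt lt.
rewrite -ltnNge => lt; move: e; rewrite -(subnK (ltnW lt)) natrD.
move/eqP; rewrite eq_sym -subr_eq0 addrK; move/pcharf0P: charK0 => ->.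
by rewrite subn_eq0 leqNgt lt.
Qed.

Lemma poly_eval0 (q : {poly K}) : (forall y, q.[y] = 0) -> q = 0.
Proof.
move=> h; apply: (@roots_geq_poly_eq0 _ _ [seq i%:R | i <- iota 0 (size q)]).
- by apply/allP=> x /mapP [i _ ->]; rewrite /root h.
- by rewrite map_inj_uniq ?iota_uniq //; apply: natf_inj.
by rewrite size_map size_iota.
Qed.

Lemma d0 : d 0 = 0.
Proof.
have h := dlin 1 0 0; rewrite !scale1r !addr0 in h.
by apply: (@addrI _ (d 0)); rewrite addr0 -h.
Qed.
Lemma dD f g : d (f + g) = d f + d g.
Proof. by have := dlin 1 f g; rewrite !scale1r. Qed.
Lemma dZ k f : d (k *: f) = k *: d f.
Proof. by have := dlin k f 0; rewrite !addr0 d0 addr0. Qed.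
Lemma dN f : d (- f) = - d f.
Proof. by rewrite -scaleN1r dZ scaleN1r. Qed.
Lemma dB f g : d (f - g) = d f - d g.
Proof. by rewrite dD dN. Qed.
Lemma dsum (I : Type) (r : seq I) (P : pred I) (F : I -> {poly K}) :
  d (\sum_(i <- r | P i) F i) = \sum_(i <- r | P i) d (F i).
Proof. exact: (big_morph d dD d0). Qed.

Lemma shiftpE (a : K) (f : {poly K}) : shiftp a f = f \Po ('X + a%:P).
Proof. by []. Qed.

Lemma d1 : d 1 = 0.
Proof.
have := dshift 1 'X; rewrite /shiftp comp_polyX dX comp_polyC polyC1.
rewrite -{1}(scale1r 'X) dlin scale1r dX => /eqP.
by rewrite -subr_eq0 addrC addKr => /eqP.
Qed.
Lemma dC k : d k%:P = 0.
Proof. have -> : k%:P = k *: (1 : {poly K}) by rewrite -mul_polyC mulr1. by rewrite dZ d1 scaler0. Qed.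

Lemma taylor_poly (N : nat) (y : K) (f : {poly K}) : (size f <= N)%N ->
  shiftp y f = \sum_(i < N) (f^`N(i)).[y] *: 'X^i.
Proof.
move=> hN; rewrite /shiftp /comp_poly addrC.
rewrite (@nderiv_taylor_wide _ N (f^:P) y%:P 'X); last by rewrite size_map_polyC.
  apply: eq_bigr => i _; rewrite nderivn_map horner_map /=.
  by rewrite mul_polyC.
exact: mulrC.
Qed.

Definition beta i := (d 'X^i).[0].

Lemma drep (N : nat) (f : {poly K}) : (size f <= N)%N -> d f = \sum_(i < N) beta i *: f^`N(i).
Proof.
move=> hN; apply/eqP; rewrite -subr_eq0; apply/eqP; apply: poly_eval0 => y.
apply/eqP; rewrite hornerD hornerN subr_eq0; apply/eqP.
have -> : (d f).[y] = (shiftp y (d f)).[0].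
  by rewrite /shiftp horner_comp hornerD hornerX hornerC add0r.
rewrite -dshift (taylor_poly y hN) dsum horner_sum horner_sum.
apply: eq_bigr => i _; rewrite dZ hornerZ hornerZ mulrC.
by [].
Qed.

Lemma size_deriv_le (g : {poly K}) : (size g^`() <= size g)%N.
Proof.
have [-> | nz] := eqVneq g 0; first by rewrite deriv0.
exact/ltnW/lt_size_deriv.
Qed.

Lemma nderiv_deriv (g : {poly K}) i : (g^`())^`N(i) = (g^`N(i))^`().
Proof.
apply/polyP => j; rewrite coef_nderivn coef_deriv coef_deriv coef_nderivn.
rewrite -!mulrnA; congr (_ *+ _); first by rewrite addnS.
rewrite (mul_bin_down (i + j).+1 i) -addnS addKn mulnC.
by [].
Qed.

Lemma dderiv (g : {poly K}) : d (g^`()) = (d g)^`().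
Proof.
rewrite (drep (size_deriv_le g)) (drep (leqnn (size g))).
rewrite (big_morph _ (@derivD _) (@deriv0 _)); apply: eq_bigr => i _.
by rewrite derivZ nderiv_deriv.
Qed.

Lemma dderivn (g : {poly K}) k : d (g^`(k)) = (d g)^`(k).
Proof. by elim: k => [|k IH]; rewrite ?derivn0 // !derivnS dderiv IH. Qed.

Lemma dMn (f : {poly K}) m : d (f *+ m) = d f *+ m.
Proof. by rewrite -!scaler_nat dZ. Qed.

Lemma dnderivn (g : {poly K}) k : d (g^`N(k)) = (d g)^`N(k).
Proof.
have := dderivn g k; rewrite !nderivn_def dMn.
rewrite -!scaler_nat => /(congr1 (fun q => (k`!%:R : K)^-1 *: q)).
rewrite !scalerA mulVf ?scale1r //.
by move/pcharf0P: charK0 => ->; rewrite -lt0n fact_gt0.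
Qed.

Definition P (g : {poly K}) := d ('X * g) - 'X * d g.

Lemma beta0 : beta 0 = 0.
Proof. by rewrite /beta expr0 d1 horner0. Qed.
Lemma beta1 : beta 1 = c.
Proof. by rewrite /beta expr1 dX hornerC. Qed.

Lemma size_MX_le (g : {poly K}) : (size ('X * g)%R <= (size g).+1)%N.
Proof.
apply/leq_sizeP => j hj; rewrite coefXM; case: j hj => //= j hj.
by rewrite nth_default.
Qed.

Lemma Prep (N : nat) (g : {poly K}) : (size g <= N)%N ->
  P g = \sum_(i < N) beta i.+1 *: g^`N(i).
Proof.
move=> hN; rewrite /P.
rewrite (@drep N.+1 ('X * g)); last exact: leq_trans (size_MX_le g) _.
rewrite (@drep N.+1 g); last exact: leqW.
rewrite !big_ord_recl /= beta0 !scale0r !add0r mulr_sumr.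
rewrite -sumrB; apply: eq_bigr => i _.
rewrite /bump /= add1n.
have := nderivnMXaddC i g 0; rewrite polyC0 addr0 (mulrC g) => ->.
by rewrite scalerDr -scalerAr (mulrC 'X) addrK.
Qed.

Lemma PD f g : P (f + g) = P f + P g.
Proof. rewrite /P mulrDr !dD mulrDr; ring. Qed.
Lemma PZ k f : P (k *: f) = k *: P f.
Proof. by rewrite /P -scalerAr !dZ -scalerAr scalerBr. Qed.
Lemma PN f : P (- f) = - P f.
Proof. by rewrite -scaleN1r PZ scaleN1r. Qed.
Lemma PB f g : P (f - g) = P f - P g.
Proof. by rewrite PD PN. Qed.

Lemma size_d_le (f : {poly K}) : (size (d f) <= size f)%N.
Proof.
rewrite (drep (leqnn (size f))); apply/leq_sizeP => j hj.
rewrite coef_sum big1 // => i _; rewrite coefZ coef_nderivn nth_default ?mul0rn ?mulr0 //.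
exact: leq_trans hj (leq_addl _ _).
Qed.

Lemma dP (g : {poly K}) : d (P g) = P (d g).
Proof.
rewrite (Prep (size_d_le g)) (Prep (leqnn (size g))) dsum.
by apply: eq_bigr => i _; rewrite dZ dnderivn.
Qed.

Lemma coef_d (N : nat) (f : {poly K}) j : (size f <= N)%N ->
  (d f)`_j = \sum_(i < N) beta i * (f`_(i + j) *+ 'C(i + j, i)).
Proof.
move=> hN; rewrite (drep hN) coef_sum; apply: eq_bigr => i _.
by rewrite coefZ coef_nderivn.
Qed.

Lemma coef_P (N : nat) (f : {poly K}) j : (size f <= N)%N ->
  (P f)`_j = \sum_(i < N) beta i.+1 * (f`_(i + j) *+ 'C(i + j, i)).
Proof.
move=> hN; rewrite (Prep hN) coef_sum; apply: eq_bigr => i _.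
by rewrite coefZ coef_nderivn.
Qed.

Lemma coef_d_top (f : {poly K}) j : (forall k, (j.+1 < k)%N -> f`_k = 0) ->
  (d f)`_j = c * f`_j.+1 *+ j.+1.
Proof.
move=> hf; rewrite (@coef_d (size f + j.+2) f j) ?leq_addr //.
rewrite addnS addnS !big_ord_recl /= beta0 mul0r add0r big1.
  by rewrite addr0 /bump /= beta1 add1n bin1 mulrnAr.
move=> i _; rewrite /bump /= hf ?mul0rn ?mulr0 //.
by rewrite !add1n !addSn ltnS ltnS leq_addl.
Qed.

Lemma coef_P_top (f : {poly K}) j : (forall k, (j < k)%N -> f`_k = 0) ->
  (P f)`_j = c * f`_j.
Proof.
move=> hf; rewrite (@coef_P (size f + j.+1) f j) ?leq_addr //.
rewrite addnS !big_ord_recl /= beta1 add0n bin0 mulr1n big1 ?addr0 //.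
move=> i _; rewrite /bump /= hf ?mul0rn ?mulr0 //.
by rewrite add1n addSn ltnS leq_addl.
Qed.

Lemma size_d (f : {poly K}) : (size (d f) <= (size f).-1)%N.
Proof.
apply/leq_sizeP => j hj; rewrite coef_d_top.
  rewrite (nth_default 0 (_ : (size f <= j.+1)%N)) ?mulr0 ?mul0rn //.
  by case: (size f) hj.
move=> k hk; apply: nth_default; case: (size f) hj => //= n hn.
by apply: (leq_ltn_trans hn); apply: ltn_trans hk.
Qed.

Lemma lemZ (u : {poly K}) : 'X * d u + P u + P u = 0 -> u = 0.
Proof.
move=> h; apply/eqP; apply/negPn/negP => nz.
have hs : size u = (size u).-1.+1 by rewrite prednK // size_poly_gt0.
set m := (size u).-1 in hs.
have top : forall k, (m < k)%N -> u`_k = 0.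
  by move=> k hk; apply: nth_default; rewrite hs.
have e1 : ('X * d u)`_m = c * u`_m *+ m.
  rewrite coefXM; case: m top {hs} => [|m] top; first by rewrite mulr0n.
  by rewrite /= coef_d_top.
have h2 : ('X * d u)`_m + (P u)`_m + (P u)`_m = 0 by rewrite -!coefD h coef0.
move: h2; rewrite e1 (coef_P_top top).
rewrite -mulrSr -[_ + c * u`_m]mulrSr => /eqP.
rewrite -mulr_natr mulf_eq0 (negbTE (natf_neq0 m.+1)) orbF mulf_eq0 (negbTE c0) /=.
apply/negP; move: nz; apply: contra => /eqP e; rewrite -lead_coef_eq0 lead_coefE -/m e.
by [].
Qed.

Variable p : nat -> {poly K}.
Hypotheses (p_0 : p 0 = 1) (p_size : forall n, size (p n) = n.+1)
  (p_at0 : forall n, (0 < n)%N -> (p n).[0] = 0)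
  (p_d : forall n, (0 < n)%N -> d (p n) = n%:R *: p n.-1).

Definition r n := p n %/ 'X.

Lemma p_r n : (0 < n)%N -> p n = 'X * r n.
Proof.
move=> hn; have hX : 'X %| p n.
  by rewrite -['X]subr0 -polyC0 dvdp_XsubCl /root p_at0.
by rewrite /r divpKC.
Qed.

Lemma size_r n : (0 < n)%N -> size (r n) = n.
Proof.
move=> hn; have := p_size n; rewrite (p_r hn) mulrC.
have [-> | nz] := eqVneq (r n) 0; first by rewrite mul0r size_poly0.
by rewrite size_mulX // => [[]].
Qed.

Lemma Pr n : d (r n.+1) = n%:R *: r n -> P (r n.+1) = p n.
Proof.
move=> h; rewrite /P -p_r // p_d // h /=.
case: n h => [|n] h; first by rewrite scale0r mulr0 subr0 scale1r.
rewrite -scalerAr -p_r // mulrSr scalerDl scale1r.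
by rewrite addrAC subrr add0r.
Qed.

Lemma dr n : d (r n.+1) = n%:R *: r n.
Proof.
elim: n => [|n IH].
  have h1 : (size (r 1) <= 1)%N by rewrite size_r.
  by rewrite (size1_polyC h1) dC scale0r.
have hPr := Pr IH.
set u := d (r n.+2) - n.+1%:R *: r n.+1.
suff : u = 0 by move/eqP; rewrite subr_eq0 => /eqP.
apply: lemZ.
have hX : 'X * d (r n.+2) = n.+2%:R *: p n.+1 - P (r n.+2).
  by rewrite /P -p_r // p_d // opprB addrC subrK.
have e1 : 'X * u = p n.+1 - P (r n.+2).
  rewrite /u mulrBr hX -scalerAr -p_r //.
  have -> : (n.+2)%:R = (n.+1)%:R + 1 :> K by rewrite mulrSr.
  rewrite scalerDl scale1r; set q := p n.+1; set w := _ *: q.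
  ring.
have hd : d (r n.+2) = u + n.+1%:R *: r n.+1 by rewrite /u subrK.
have e2 : d ('X * u) = - P u.
  rewrite e1 dB p_d // dP hd PD PZ hPr /=.
  ring.
have e3 : d ('X * u) = 'X * d u + P u by rewrite /P addrC subrK.
by rewrite e2 in e3; rewrite -e3 addNr.
Qed.

Lemma shiftp_comp (u v : K) (f : {poly K}) :
  shiftp u (shiftp v f) = shiftp (v + u) f.
Proof.
by rewrite /shiftp -comp_polyA comp_polyD comp_polyX comp_polyC polyCD (addrC v%:P) addrA.
Qed.
Lemma shiftpM (s : K) (f g : {poly K}) : shiftp s (f * g) = shiftp s f * shiftp s g.
Proof. exact: comp_polyM. Qed.
Lemma shiftpX (s : K) : shiftp s 'X = 'X + s%:P.
Proof. exact: comp_polyX. Qed.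
Lemma shiftpC (s k : K) : shiftp s k%:P = k%:P.
Proof. exact: comp_polyC. Qed.
Lemma shiftp1 (s : K) : shiftp s 1 = 1.
Proof. by rewrite -polyC1 shiftpC. Qed.
Lemma shiftpD (s : K) (f g : {poly K}) : shiftp s (f + g) = shiftp s f + shiftp s g.
Proof. exact: comp_polyD. Qed.
Lemma shiftpZ (s k : K) (f : {poly K}) : shiftp s (k *: f) = k *: shiftp s f.
Proof. exact: comp_polyZ. Qed.
Lemma shiftp0 (f : {poly K}) : shiftp 0 f = f.
Proof. by rewrite /shiftp polyC0 addr0 comp_polyXr. Qed.
Lemma horner_shiftp (s y : K) (f : {poly K}) : (shiftp s f).[y] = f.[y + s].
Proof. by rewrite /shiftp horner_comp hornerD hornerX hornerC. Qed.
Lemma size_shiftp (s : K) (f : {poly K}) : size (shiftp s f) = size f.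
Proof. by rewrite /shiftp size_comp_poly2 // size_XaddC. Qed.

Variable b : K.
Definition Q n := if n is 0 then 1 else 'X * shiftp (- (n%:R * b)) (r n).

Lemma dQ n : d (Q n.+1) = n.+1%:R *: shiftp (- b) (Q n).
Proof.
set s := n.+1%:R * b.
have hQ : Q n.+1 = shiftp (-s) (p n.+1) + s *: shiftp (-s) (r n.+1).
  rewrite /Q -/s p_r // shiftpM shiftpX -mul_polyC -mulrDl polyCN.
  by rewrite subrK.
rewrite hQ dD dZ !dshift p_d // dr /=.
case: n @s hQ => [|n] s hQ.
  by rewrite scale0r shiftpZ p_0 shiftp1 /Q shiftp1 /shiftp comp_poly0 scaler0 addr0.
rewrite p_r // /Q !shiftpZ !shiftpM !shiftpX shiftp_comp scalerA -!mul_polyC.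
set R0 := shiftp (-s) (r n.+1).
have -> : shiftp (- (n.+1%:R * b) + - b) (r n.+1) = R0.
  rewrite /R0; congr shiftp; rewrite /s; ring.
rewrite /s !polyCM !polyCN !polyC_natr; ring.
Qed.

Lemma iter_add (k n : nat) (f : {poly K}) : iter (k + n) d f = iter k d (iter n d f).
Proof. by elim: k => //= k ->. Qed.
Lemma iter_d0 k : iter k d 0 = 0.
Proof. by elim: k => //= k ->; rewrite d0. Qed.
Lemma iter_dB k (f g : {poly K}) : iter k d (f - g) = iter k d f - iter k d g.
Proof. by elim: k => //= k ->; rewrite dB. Qed.
Lemma iter_dZ k (x : K) (f : {poly K}) : iter k d (x *: f) = x *: iter k d f.
Proof. by elim: k => //= k ->; rewrite dZ. Qed.
Lemma iter_dD k (f g : {poly K}) : iter k d (f + g) = iter k d f + iter k d g.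
Proof. by elim: k => //= k ->; rewrite dD. Qed.
Lemma iter_shift k (s : K) (f : {poly K}) : iter k d (shiftp s f) = shiftp s (iter k d f).
Proof. by elim: k => //= k ->; rewrite dshift. Qed.

Lemma iterQ i n : (i <= n)%N ->
  iter i d (Q n) = (n ^_ i)%:R *: shiftp (- (i%:R * b)) (Q (n - i)).
Proof.
elim: i => [|i IH] hi.
  by rewrite ffactn0 mul0r oppr0 shiftp0 subn0 scale1r.
rewrite iterS IH ?(ltnW hi) // dZ dshift -(subnSK hi) dQ shiftpZ shiftp_comp.
rewrite scalerA ffactnSr natrM subnSK //.
congr (_ *: shiftp _ _); ring.
Qed.

Lemma iterQ_big k n : iter (k.+1 + n) d (Q n) = 0.
Proof.
rewrite iter_add iterQ // subnn iterSr dZ dshift (_ : Q 0 = 1) // d1 /shiftp comp_poly0 ?scaler0 ?iter_d0 //.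

Qed.

Lemma Q_at0 m : (Q m).[0] = (m == 0%N)%:R.
Proof. by case: m => [|m] /=; rewrite ?hornerC // hornerM hornerX mul0r. Qed.

Lemma size_Q n : (size (Q n) <= n.+1)%N.
Proof.
case: n => [|n] /=; first by rewrite size_poly1.
apply: leq_trans (size_MX_le _) _; rewrite size_shiftp size_r //.
Qed.

Lemma iterP i n : (i <= n)%N -> iter i d (p n) = (n ^_ i)%:R *: p (n - i).
Proof.
elim: i => [|i IH] hi; first by rewrite ffactn0 subn0 scale1r.
rewrite iterS IH ?(ltnW hi) // dZ p_d ?subn_gt0 // scalerA ffactnSr natrM.
by rewrite -subnS.
Qed.

Lemma iter_kill m (w : {poly K}) : (size w <= m)%N -> iter m d w = 0.
Proof.
elim: m w => [|m IH] w hw /=; first by move: hw; rewrite size_poly_leq0 => /eqP.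
rewrite -iterS iterSr IH //.
by apply: leq_trans (size_d w) _; rewrite -ltnS; case: (size w) hw.
Qed.

Variable a : K.
Definition z (i : nat) := a + i%:R * b.
Definition T n := shiftp (-a) (Q n).

Lemma T_gonc i n : (iter i d (T n)).[z i] = (n`!)%:R * (i == n)%:R.
Proof.
case: (leqP i n) => hi.
  rewrite /T iter_shift horner_shiftp iterQ // hornerZ horner_shiftp.
  have -> : z i + - a + - (i%:R * b) = 0 by rewrite /z; ring.
  rewrite Q_at0; case: (eqVneq i n) => [-> | ne].
    by rewrite ffactnn subnn /= mulr1.
  have -> : (n - i == 0)%N = false.
    by rewrite subn_eq0 leqNgt ltn_neqAle ne hi.
  by rewrite /= !mulr0.
have ei : (i = (i - n.+1).+1 + n)%N by rewrite addSnnS subnK.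
rewrite /T iter_shift (_ : iter i d (Q n) = 0); last by rewrite ei iterQ_big.
by rewrite /shiftp comp_poly0 horner0 gtn_eqF // mulr0.
Qed.

Lemma uniq_gonc m (v : {poly K}) : (size v <= m)%N ->
  (forall i, (i < m)%N -> (iter i d v).[z i] = 0) -> v = 0.
Proof.
elim: m v => [|m IH] v hs hv.
  by move: hs; rewrite size_poly_leq0 => /eqP.
have lp : (p m)`_m != 0.
  have := p_size m; move=> hsz.
  have : lead_coef (p m) != 0 by rewrite lead_coef_eq0 -size_poly_eq0 hsz.
  by rewrite lead_coefE hsz.
set k := v`_m / (p m)`_m.
set w := v - k *: p m.
have hw : (size w <= m)%N.
  apply/leq_sizeP => j hj; rewrite /w coefB coefZ.
  case: (eqVneq j m) => [-> | ne]; first by rewrite /k divfK // subrr.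
  have hj' : (m < j)%N by rewrite ltn_neqAle eq_sym ne hj.
  rewrite !nth_default ?mulr0 ?subrr //; first by rewrite p_size.
  exact: leq_trans hs hj'.
have hk : k = 0.
  have := hv m (ltnSn m).
  have -> : v = w + k *: p m by rewrite /w subrK.
  rewrite iter_dD iter_kill // add0r iter_dZ iterP // ffactnn subnn p_0.
  rewrite hornerZ hornerZ hornerC => /eqP; rewrite mulf_eq0 => /orP [/eqP //|].
  rewrite mulr1; move/pcharf0P: charK0 => -> /eqP h.
  by move: (fact_gt0 m); rewrite h.
have ew : v = w by rewrite /w hk scale0r subr0.
rewrite ew; apply: IH; first exact: hw.
by move=> i hi; rewrite -ew; apply: hv; apply: ltnW.
Qed.

Lemma final (t : nat -> {poly K}) (tsz : forall n, size (t n) = n.+1)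
  (tg : forall i n, (iter i d (t n)).[z i] = (n`!)%:R * (i == n)%:R) n :
  (0 < n)%N ->
  t n * ('X - (a + n%:R * b)%:P) = ('X - a%:P) * (p n \Po ('X - (a + n%:R * b)%:P)).
Proof.
move=> hn.
have ht : t n = T n.
  apply/eqP; rewrite -subr_eq0; apply/eqP; apply: (@uniq_gonc n.+1).
    apply: leq_trans (size_polyD _ _) _; rewrite size_polyN geq_max tsz leqnn /=.
    by rewrite /T size_shiftp size_Q.
  by move=> i hi; rewrite iter_dB hornerD hornerN tg T_gonc subrr.
rewrite ht /T; case: n hn {ht} => // n _.
rewrite /Q shiftpM shiftpX shiftp_comp p_r //.
rewrite (_ : 'X - (a + n.+1%:R * b)%:P = 'X + (- (a + n.+1%:R * b))%:P); last first.
  by rewrite polyCN.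
rewrite -/(shiftp _ _) shiftpM shiftpX.
have -> : (- (n.+1%:R * b) + - a) = - (a + n.+1%:R * b) by ring.
rewrite !polyCN; ring.
Qed.
End Delta.

Unset Implicit Arguments.

Theorem mainTheorem16 (K : fieldType) (charK0 : [pchar K] =i pred0)
  (d : {poly K} -> {poly K}) (p : nat -> {poly K}) (a b : K)
  (t : nat -> {poly K}) :
  is_delta_operator d ->
  is_basic_sequence d p ->
  is_goncarov_basis d (fun i => a + i%:R * b) t ->
  forall n : nat, (0 < n)%N ->
    t n * ('X - (a + n%:R * b)%:P) =
    ('X - a%:P) * (p n \Po ('X - (a + n%:R * b)%:P)).
Proof.
move=> [dlin dshift [c c0 dX]] [p0 psz p0e pd] [tsz tg].
exact: (final charK0 dlin dshift c0 dX p0 psz p0e pd tsz tg).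
Qed.
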